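(* Let $P_1$ be the uniform distribution on $[0,\frac12]$, let $P_2$ be the uniform distribution on $[\frac34,1]$, and let $P=\frac34P_1+\frac14P_2$. Then the set $\{\frac18,\frac38,\frac78\}$ forms an optimal set of three-means for $P$, with quantization error $V_3=\frac1{192}$.
   Context: For a finite set $\alpha\subset\mathbb R$, $V(P;\alpha)=\int\min_{a\in\alpha}(x-a)^2\,dP(x)$; $V_n=\inf\{V(P;\alpha):\mathrm{card}(\alpha)\le n\}$; an optimal set of $n$-means is a set $\alpha$ with $\mathrm{card}(\alpha)\le n$ and $V(P;\alpha)=V_n$. *)

(* Defs.v *)
From HB Require Import structures.
From mathcomp Require Import all_boot all_order all_algebra.
From mathcomp Require Import finmap.
From mathcomp Require Import all_classical all_reals all_analysis.
Set Implicit Arguments. Unset Strict Implicit. Unset Printing Implicit Defensive.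
Import Order.TTheory GRing.Theory Num.Theory.
Local Open Scope classical_set_scope.
Local Open Scope ring_scope.

Definition quant_err (R : realType) (P : {measure set (measurableTypeR R) -> \bar R})
    (alpha : {fset R}) : \bar R :=
  (\int[P]_x \big[Order.min/+oo%E]_(a <- alpha) ((x - a) ^+ 2)%:E)%E.

Definition Vn (R : realType) (P : {measure set (measurableTypeR R) -> \bar R}) (n : nat) : \bar R :=
  ereal_inf [set quant_err P beta | beta in [set beta : {fset R} | (#|` beta| <= n)%N]].

Definition optimal_n_means (R : realType) (P : {measure set (measurableTypeR R) -> \bar R})
    (n : nat) (alpha : {fset R}) : Prop :=
  (#|` alpha| <= n)%N /\ quant_err P alpha = Vn P n.

Lemma lt_0_half (R : realType) : (0 : R) < 1 / 2.
Proof. by rewrite divr_gt0 // ltr0n. Qed.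

Lemma lt_34_1 (R : realType) : (3 / 4 : R) < 1.
Proof. by rewrite ltr_pdivrMr ?ltr0n // mul1r ltr_nat. Qed.

Definition P1 (R : realType) : {measure set (measurableTypeR R) -> \bar R} := uniform_prob (lt_0_half R).
Definition P2 (R : realType) : {measure set (measurableTypeR R) -> \bar R} := uniform_prob (lt_34_1 R).

Definition Pmix (R : realType) : {measure set (measurableTypeR R) -> \bar R} :=
  measure_add (mscale (3 / 4 : R)%:nng (P1 R)) (mscale (1 / 4 : R)%:nng (P2 R)).

(* Main.v *)
Require Import Defs.
From HB Require Import structures.
From mathcomp Require Import all_boot all_order all_algebra.
From mathcomp Require Import finmap.
From mathcomp Require Import all_classical all_reals all_analysis.
From mathcomp Require Import ring lra measurable_realfun.
Set Implicit Arguments. Unset Strict Implicit.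
Import Order.TTheory GRing.Theory Num.Theory.
Import numFieldNormedType.Exports.
Local Open Scope classical_set_scope.
Local Open Scope ring_scope.
Section S.
Context (R : realType).
Local Notation mu := (@lebesgue_measure R).

Lemma F_derive (a x : R) :
  is_derive x 1 (fun y : R => (y - a) ^+ 3 / 3) ((x - a) ^+ 2).
Proof.
have h1 : is_derive x (1:R) (fun y : R => y - a) 1.
  apply: is_derive_eq.

  by rewrite subr0.
have h2 := is_deriveX 3 h1.
have h3 := is_deriveM h2 (is_derive_cst (3^-1 : R) x 1).
apply: (is_derive_eq h3).
rewrite scaler0 add0r /cst /= /GRing.scale /= mulr1 mulrA mulVf ?mul1r //; by rewrite pnatr_eq0.
Qed.

Lemma F_dv (a x : R) : derivable (fun y : R => (y - a) ^+ 3 / 3) x 1.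
Proof. by have := F_derive a x; case. Qed.

Lemma F_d1 (a x : R) : ((fun y : R => (y - a) ^+ 3 / 3)^`())%classic x = (x - a) ^+ 2.
Proof. by rewrite derive.derive1E; apply: (@derive.derive_val _ _ _ _ _ _ _ (F_derive a x)). Qed.

Lemma Fc (a z : R) : {for z, continuous (fun y : R => (y - a) ^+ 3 / 3)}.
Proof. apply: differentiable_continuous; rewrite -derivable1_diffP; exact: F_dv. Qed.

Lemma int_sq (a c d : R) : c < d ->
  (\int[mu]_(x in `[c, d]) ((x - a) ^+ 2)%:E =
   (((d - a) ^+ 3 - (c - a) ^+ 3) / 3)%:E)%E.
Proof.
move=> cd.
have cF : {within `[c, d], continuous (fun x : R => (x - a) ^+ 2)}.
  apply: continuous_subspaceT => z.
  apply: differentiable_continuous; rewrite -derivable1_diffP.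
  have h1 : is_derive z (1:R) (fun y : R => y - a) 1.
    by apply: is_derive_eq; rewrite subr0.
  by have := is_deriveX 2 h1; case.
have dF : derivable_oo_LRcontinuous (fun y : R => (y - a) ^+ 3 / 3) c d.
  split.
  + move=> z _; exact: F_dv.
  + apply: cvg_at_right_filter. exact: Fc.
  + apply: cvg_at_left_filter. exact: Fc.
rewrite (@continuous_FTC2 _ _ (fun y : R => (y - a) ^+ 3 / 3) _ _ cd cF dF).
  by rewrite -EFinB mulrBl.
move=> z _; exact: F_d1.
Qed.

Definition LI (c d : R) (g : R -> R) := (\int[mu]_(x in `[c, d]) (g x)%:E)%E.

Lemma LI_split (c m d : R) (g : R -> R) : c <= m -> m <= d ->
  measurable_fun setT g -> (forall x, 0 <= g x) ->
  LI c d g = (LI c m g + LI m d g)%E.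
Proof.
move=> cm md mg g0; rewrite /LI.
rewrite (@itv_bndbnd_setU _ _ (BLeft c) (BRight m) (BRight d)); last 2 first.
  by rewrite bnd_simp. by rewrite bnd_simp.
rewrite ge0_integral_setU //=.
- rewrite -(@integral_itv_obnd_cbnd _ m (BRight d)) //.
  apply/measurable_EFinP; exact: measurable_funS mg.
- apply/measurable_EFinP; exact: measurable_funS mg.
- by move=> x _; rewrite lee_fin.
- apply/disj_setPS => x /=; rewrite !in_itv/= => -[/andP[_ h1] /andP[h2 _]].
  by move: (lt_le_trans h2 h1); rewrite ltxx.
Qed.

Lemma msq (a : R) : measurable_fun setT (fun x : R => (x - a) ^+ 2).
Proof. by apply: measurable_funX; apply: measurable_funB. Qed.

Lemma LI_piece (c d a : R) (g : R -> R) : c <= d ->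
  measurable_fun setT g -> (forall x, 0 <= g x) ->
  (forall x, c <= x -> x <= d -> (x - a) ^+ 2 <= g x) ->
  ((((d - a) ^+ 3 - (c - a) ^+ 3) / 3)%:E <= LI c d g)%E.
Proof.
move=> cd mg g0 hg.
case: (ltP c d) => cd'; last first.
  have -> : d = c by apply/eqP; rewrite eq_le cd' cd.
  rewrite subrr mul0r; apply: integral_ge0 => x _; by rewrite lee_fin.
rewrite -int_sq //; apply: ge0_le_integral => //.
- by move=> x _; rewrite lee_fin sqr_ge0.
- apply/measurable_EFinP; apply: measurable_funS (msq a) => //.
- apply/measurable_EFinP; exact: measurable_funS mg.
- by move=> x; rewrite /= in_itv /= => /andP[h1 h2]; rewrite lee_fin hg.
Qed.

Lemma p_one (a c d : R) : c <= d -> (d - c) ^+ 3 / 12 <= ((d - a) ^+ 3 - (c - a) ^+ 3) / 3.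
Proof.
move=> cd.
have h : 0 <= (d - c) * (d + c - 2 * a) ^+ 2 by apply: mulr_ge0; [lra| exact: sqr_ge0].
have e : ((d - a) ^+ 3 - (c - a) ^+ 3) / 3 - (d - c) ^+ 3 / 12 = (d - c) * (d + c - 2 * a) ^+ 2 / 4.
  by field.
lra.
Qed.
Lemma p_two (c m d : R) : c <= m -> m <= d -> (d - c) ^+ 3 / 48 <= (m - c) ^+ 3 / 12 + (d - m) ^+ 3 / 12.
Proof.
move=> cm md.
have h : 0 <= (d - c) * (2 * m - c - d) ^+ 2 by apply: mulr_ge0; [lra| exact: sqr_ge0].
have e : (m - c) ^+ 3 / 12 + (d - m) ^+ 3 / 12 - (d - c) ^+ 3 / 48 = (d - c) * (2 * m - c - d) ^+ 2 / 16.
  by field.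
lra.
Qed.

Lemma sq_le_l (x p q : R) : p <= q -> x <= (p + q) / 2 -> (x - p) ^+ 2 <= (x - q) ^+ 2.
Proof.
move=> pq xm.
have e : (x - q) ^+ 2 - (x - p) ^+ 2 = (q - p) * (p + q - 2 * x) by ring.
have : 0 <= (q - p) * (p + q - 2 * x) by apply: mulr_ge0; lra.
lra.
Qed.

Lemma sq_le_r (x p q : R) : p <= q -> (p + q) / 2 <= x -> (x - q) ^+ 2 <= (x - p) ^+ 2.
Proof.
move=> pq xm.
have e : (x - p) ^+ 2 - (x - q) ^+ 2 = (q - p) * (2 * x - p - q) by ring.
have : 0 <= (q - p) * (2 * x - p - q) by apply: mulr_ge0; lra.
lra.
Qed.

Lemma LI_one (c d a : R) (g : R -> R) : c <= d ->
  measurable_fun setT g -> (forall x, 0 <= g x) ->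
  (forall x, c <= x -> x <= d -> (x - a) ^+ 2 <= g x) ->
  (((d - c) ^+ 3 / 12)%:E <= LI c d g)%E.
Proof.
move=> cd mg g0 hg; apply: (le_trans _ (LI_piece cd mg g0 hg)).
by rewrite lee_fin p_one.
Qed.

Lemma LI_two (c d p q : R) (g : R -> R) : c <= d -> p <= q ->
  measurable_fun setT g -> (forall x, 0 <= g x) ->
  (forall x, c <= x -> x <= d -> Num.min ((x - p) ^+ 2) ((x - q) ^+ 2) <= g x) ->
  (((d - c) ^+ 3 / 48)%:E <= LI c d g)%E.
Proof.
move=> cd pq mg g0 hg.
have w : (d - c) ^+ 3 / 48 <= (d - c) ^+ 3 / 12.
  have : 0 <= (d - c) ^+ 3 by apply: exprn_ge0; lra.
  lra.
case: (lerP ((p + q) / 2) c) => h1.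
  apply: (le_trans _ (LI_one (a:=q) cd mg g0 _)); first by rewrite lee_fin.
  move=> x cx xd; apply: le_trans (hg x cx xd).
  by rewrite (min_r (sq_le_r pq _)) //; lra.
case: (lerP d ((p + q) / 2)) => h2.
  apply: (le_trans _ (LI_one (a:=p) cd mg g0 _)); first by rewrite lee_fin.
  move=> x cx xd; apply: le_trans (hg x cx xd).
  by rewrite (min_l (sq_le_l pq _)) //; lra.
set m := (p + q) / 2.
have cm : c <= m by rewrite /m; lra.
have md : m <= d by rewrite /m; lra.
rewrite (LI_split cm md mg g0).
apply: (le_trans _ (leeD (LI_one (a:=p) _ mg g0 _) (LI_one (a:=q) _ mg g0 _))).
- by rewrite -EFinD lee_fin p_two //; lra.
- lra.
- move=> x cx xd; apply: le_trans (hg x cx _); last lra.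
  by rewrite (min_l (sq_le_l pq _)) //.
- lra.
- move=> x cx xd; apply: le_trans (hg x _ xd); last lra.
  by rewrite (min_r (sq_le_r pq _)) //.
Qed.

Lemma q1 (m : R) : 0 <= m -> m <= 1/2 -> 1/288 <= (m - 0) ^+ 3 / 12 + ((1/2 - 5/8) ^+ 3 - (m - 5/8) ^+ 3) / 3.
Proof. move=> h1 h2.
have h : 0 <= (m - 5/12) ^+ 2 * (5/3 - m) by apply: mulr_ge0; [exact: sqr_ge0 | lra].
nra. Qed.
Lemma q3 (m : R) : 0 <= m -> m <= 1/2 -> 1/384 <= (m - 0) ^+ 3 / 48 + ((1/2 - 5/8) ^+ 3 - (m - 5/8) ^+ 3) / 3.
Proof. move=> h1 h2.
have h : 0 <= (2 * m - 1) ^+ 2 * (1 - m) by apply: mulr_ge0; [exact: sqr_ge0 | lra].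
nra. Qed.
Lemma q2 (c : R) : 3/4 <= c -> c <= 1 -> 1/768 <= ((c - 5/8) ^+ 3 - (3/4 - 5/8) ^+ 3) / 3 + ((1 - (2 * c - 5/8)) ^+ 3 - (c - (2 * c - 5/8)) ^+ 3) / 3.
Proof. move=> h1 h2.
have h : 0 <= (c - 3/4) ^+ 2 * (3 - 6 * (c - 5/8)) by apply: mulr_ge0; [exact: sqr_ge0 | lra].
nra. Qed.

Definition g3 (a1 a2 a3 x : R) :=
  Num.min (Num.min ((x - a1) ^+ 2) ((x - a2) ^+ 2)) ((x - a3) ^+ 2).

Lemma g3_meas a1 a2 a3 : measurable_fun setT (g3 a1 a2 a3).
Proof. by apply: measurable_minr; [apply: measurable_minr|]; exact: msq. Qed.

Lemma g3_ge0 a1 a2 a3 x : 0 <= g3 a1 a2 a3 x.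
Proof. by rewrite /g3 !le_min !sqr_ge0. Qed.

Lemma lb3 a1 a2 a3 x (T : R) : T <= (x - a1) ^+ 2 -> T <= (x - a2) ^+ 2 ->
  T <= (x - a3) ^+ 2 -> T <= g3 a1 a2 a3 x.
Proof. by move=> h1 h2 h3; rewrite /g3 !le_min h1 h2 h3. Qed.

Lemma LI_ge0 c d g : (forall x, 0 <= g x) -> (0%:E <= LI c d g)%E.
Proof. by move=> g0; apply: integral_ge0 => x _; rewrite lee_fin. Qed.

Lemma comb (X Y : \bar R) (x0 y0 : R) : (x0%:E <= X)%E -> (y0%:E <= Y)%E ->
  1/192 <= 3/2 * x0 + y0 -> ((1/192)%:E <= (3/2)%:E * X + Y)%E.
Proof.
move=> hX hY h.
apply: (le_trans _ (leeD (lee_wpmul2l _ hX) hY)); last by rewrite lee_fin.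
by rewrite -EFinM -EFinD lee_fin.
Qed.

Lemma comb2 (X1 X2 : \bar R) (x1 x2 : R) : (x1%:E <= X1)%E -> (x2%:E <= X2)%E ->
  ((x1 + x2)%:E <= X1 + X2)%E.
Proof. by move=> h1 h2; rewrite EFinD leeD. Qed.

Lemma lower_sorted a1 a2 a3 : a1 <= a2 -> a2 <= a3 ->
  ((1/192)%:E <= (3/2)%:E * LI 0 (1/2) (g3 a1 a2 a3) + LI (3/4) 1 (g3 a1 a2 a3))%E.
Proof.
move=> h12 h23.
set G := g3 a1 a2 a3.
have mG : measurable_fun setT G by exact: g3_meas.
have G0 : forall x, 0 <= G x by move=> x; exact: g3_ge0.
have I1b : (5/8 < a1) \/ (a1 <= 5/8 /\ 5/8 < a2) \/ (a2 <= 5/8 /\ 5/8 < a3) \/ (a3 <= 5/8).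
  case: (ltrP (5/8) a1) => h1; first by left.
  case: (ltrP (5/8) a2) => h2; first by right; left.
  case: (ltrP (5/8) a3) => h3; first by right; right; left.
  by right; right; right.
case: I1b => [hA|[[hB1 hB2]|[[hC1 hC2]|hD]]].
-
  have H1 := @LI_piece 0 (1/2) (5/8) G ltac:(lra) mG G0.
  apply: (comb (H1 _) (LI_ge0 _ _ G0)); last by nra.
  move=> x h0 h1; apply: lb3; apply: sq_le_l; lra.
-
  have hb : forall x, x <= 1/2 -> (x - 5/8) ^+ 2 <= G x -> True by [].
  set m := (a1 + 5/8) / 2.
  case: (lerP (1/2) m) => hm1.
    have H1 := @LI_one 0 (1/2) a1 G ltac:(lra) mG G0.
    apply: (comb (H1 _) (LI_ge0 _ _ G0)); last by nra.
    move=> x h0 h1; apply: lb3 => //.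
    + by apply: (le_trans (y := (x - 5/8) ^+ 2)); apply: sq_le_l; rewrite /m in hm1; lra.
    + by apply: (le_trans (y := (x - 5/8) ^+ 2)); apply: sq_le_l; rewrite /m in hm1; lra.
  case: (lerP m 0) => hm0.
    have H1 := @LI_piece 0 (1/2) (5/8) G ltac:(lra) mG G0.
    apply: (comb (H1 _) (LI_ge0 _ _ G0)); last by nra.
    move=> x h0 h1; apply: lb3; [apply: sq_le_r|apply: sq_le_l|apply: sq_le_l]; rewrite /m in hm0; lra.
  have cm : 0 <= m by lra.
  have md : m <= 1/2 by lra.
  rewrite (LI_split cm md mG G0).
  have H1 := @LI_one 0 m a1 G cm mG G0.
  have H2 := @LI_piece m (1/2) (5/8) G md mG G0.
  apply: (comb (comb2 (H1 _) (H2 _)) (LI_ge0 _ _ G0)).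
  + move=> x h0 h1; apply: lb3 => //.
    * by apply: (le_trans (y := (x - 5/8) ^+ 2)); apply: sq_le_l; rewrite /m in h1; lra.
    * by apply: (le_trans (y := (x - 5/8) ^+ 2)); apply: sq_le_l; rewrite /m in h1; lra.
  + move=> x h0 h1; apply: lb3; [apply: sq_le_r|apply: sq_le_l|apply: sq_le_l]; rewrite /m in h0; lra.
  + have q := q1 cm md; lra.
-
  have HY : ((1/768)%:E <= LI (3/4) 1 G)%E.
    set c := (5/8 + a3) / 2.
    case: (lerP c (3/4)) => hc1.
      apply: (le_trans _ (@LI_one (3/4) 1 a3 G ltac:(lra) mG G0 _)).
        by rewrite lee_fin; lra.
      move=> x h0 h1; apply: lb3 => //.
      + by apply: (le_trans (y := (x - 5/8) ^+ 2)); [apply: sq_le_r|apply: sq_le_r]; rewrite /c in hc1; lra.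
      + by apply: (le_trans (y := (x - 5/8) ^+ 2)); [apply: sq_le_r|apply: sq_le_r]; rewrite /c in hc1; lra.
    case: (lerP 1 c) => hc2.
      apply: (le_trans _ (@LI_piece (3/4) 1 (5/8) G ltac:(lra) mG G0 _)).
        by rewrite lee_fin; nra.
      move=> x h0 h1; apply: lb3; [apply: sq_le_r|apply: sq_le_r|apply: sq_le_l]; rewrite /c in hc2; lra.
    have cm : 3/4 <= c by lra.
    have md : c <= 1 by lra.
    rewrite (LI_split cm md mG G0).
    have H1 := @LI_piece (3/4) c (5/8) G cm mG G0.
    have H2 := @LI_piece c 1 a3 G md mG G0.
    apply: (le_trans _ (comb2 (H1 _) (H2 _))).
    + have := q2 cm md.
      have -> : 2 * c - 5/8 = a3 by rewrite /c; field.
      by move=> q; rewrite lee_fin; lra.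
    + move=> x h0 h1; apply: lb3; [apply: sq_le_r|apply: sq_le_r|apply: sq_le_l]; rewrite /c in h1; lra.
    + move=> x h0 h1; apply: lb3 => //.
      * by apply: (le_trans (y := (x - 5/8) ^+ 2)); [apply: sq_le_r|apply: sq_le_r]; rewrite /c in h0; lra.
      * by apply: (le_trans (y := (x - 5/8) ^+ 2)); [apply: sq_le_r|apply: sq_le_r]; rewrite /c in h0; lra.
  have HX : ((1/384)%:E <= LI 0 (1/2) G)%E.
    set m := (a2 + 5/8) / 2.
    case: (lerP (1/2) m) => hm1.
      apply: (le_trans _ (@LI_two 0 (1/2) a1 a2 G ltac:(lra) h12 mG G0 _)).
        by rewrite lee_fin; lra.
      move=> x h0 h1; apply: lb3; first by rewrite ge_min lexx.
        by rewrite ge_min lexx orbT.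
      rewrite ge_min; apply/orP; right.
      by apply: (le_trans (y := (x - 5/8) ^+ 2)); apply: sq_le_l; rewrite /m in hm1; lra.
    case: (lerP m 0) => hm0.
      apply: (le_trans _ (@LI_piece 0 (1/2) (5/8) G ltac:(lra) mG G0 _)).
        by rewrite lee_fin; nra.
      move=> x h0 h1; apply: lb3; [apply: sq_le_r|apply: sq_le_r|apply: sq_le_l]; rewrite /m in hm0; lra.
    have cm : 0 <= m by lra.
    have md : m <= 1/2 by lra.
    rewrite (LI_split cm md mG G0).
    have H1 := @LI_two 0 m a1 a2 G cm h12 mG G0.
    have H2 := @LI_piece m (1/2) (5/8) G md mG G0.
    apply: (le_trans _ (comb2 (H1 _) (H2 _))).
    + have := q3 cm md.
      by move=> q; rewrite lee_fin; lra.
    + move=> x h0 h1; apply: lb3; first by rewrite ge_min lexx.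
        by rewrite ge_min lexx orbT.
      rewrite ge_min; apply/orP; right.
      by apply: (le_trans (y := (x - 5/8) ^+ 2)); apply: sq_le_l; rewrite /m in h1; lra.
    + move=> x h0 h1; apply: lb3; [apply: sq_le_r|apply: sq_le_r|apply: sq_le_l]; rewrite /m in h0; lra.
  apply: (comb HX HY); lra.
-
  have H2 := @LI_piece (3/4) 1 (5/8) G ltac:(lra) mG G0.
  apply: (comb (LI_ge0 _ _ G0) (H2 _)); last by nra.
  move=> x h0 h1; apply: lb3; apply: sq_le_r; lra.
Qed.

Lemma int_Pmix (F : R -> \bar R) : measurable_fun setT F -> (forall x, (0 <= F x)%E) ->
  (\int[Pmix R]_x F x = (3/2)%:E * \int[mu]_(x in `[0%R, (1/2)%R : R]) F x + \int[mu]_(x in `[(3/4)%R : R, 1%R]) F x)%E.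
Proof.
move=> mF F0.
rewrite /Pmix ge0_integral_measure_add //.
rewrite !ge0_integral_mscale //.
rewrite /P1 /P2 !integral_uniform //.
rewrite !muleA -!EFinM; congr (_ + _)%E.
  by congr (_ * _)%E; congr EFin; rewrite /=; field.
by rewrite -[RHS]mul1e; congr (_ * _)%E; congr EFin; rewrite /=; field.
Qed.

Lemma bm_le (s : seq R) (F : R -> \bar R) a : a \in s ->
  (\big[Order.min/+oo%E]_(b <- s) F b <= F a)%E.
Proof.
elim: s => [//|b s IH]; rewrite inE big_cons => /orP[/eqP ->|h].
  by rewrite ge_min lexx.
by rewrite ge_min (IH h) orbT.
Qed.

Lemma bm_ge (s : seq R) (F : R -> \bar R) z : (forall b, b \in s -> (z <= F b)%E) ->
  (z <= \big[Order.min/+oo%E]_(b <- s) F b)%E.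
Proof.
elim: s => [|b s IH] h; first by rewrite big_nil leey.
rewrite big_cons le_min h ?mem_head //= IH // => c cs; apply: h.
by rewrite inE cs orbT.
Qed.

Lemma bm_meas (s : seq R) :
  measurable_fun setT (fun x : R => \big[Order.min/+oo%E]_(a <- s) ((x - a) ^+ 2)%:E).
Proof.
elim: s => [|b s IH].
  by under eq_fun do rewrite big_nil; exact: measurable_cst.
under eq_fun do rewrite big_cons.
apply: measurable_mine => //.
apply/measurable_EFinP; by apply: measurable_funX; apply: measurable_funB.
Qed.

Lemma bm_ge0 (s : seq R) x : (0 <= \big[Order.min/+oo%E]_(a <- s) ((x - a) ^+ 2)%:E)%E.
Proof. by apply: bm_ge => b _; rewrite lee_fin sqr_ge0. Qed.

Lemma cover (B : {fset R}) : (#|` B| <= 3)%N ->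
  exists a1 a2 a3 : R, [/\ a1 <= a2, a2 <= a3 &
    forall a, a \in B -> [\/ a = a1, a = a2 | a = a3]].
Proof.
move=> hB.
have : (size (sort <=%R (B : seq R)) <= 3)%N by rewrite size_sort.
have srt := sort_sorted (@le_total _ R) (B : seq R).
have mem : forall a, a \in B -> a \in sort <=%R (B : seq R) by move=> a; rewrite mem_sort.
move: srt mem; case: (sort _ _) => [|x [|y [|z [|w t]]]] //= srt mem _.
- by exists 0, 0, 0; split => // a /mem.
- exists x, x, x; split => // a /mem; rewrite inE => /eqP ->; by constructor.
- move: srt; rewrite andbT => xy.
  exists x, y, y; split => // a /mem; rewrite !inE => /orP[|] /eqP ->; by constructor.
- move: srt; rewrite andbT => /andP[xy yz].
  exists x, y, z; split => // a /mem; rewrite !inE => /orP[|/orP[|]] /eqP ->; by constructor.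
Qed.


Lemma LI_piece_le (c d a : R) (g : R -> R) : c < d ->
  measurable_fun setT g -> (forall x, 0 <= g x) ->
  (forall x, c <= x -> x <= d -> g x <= (x - a) ^+ 2) ->
  (LI c d g <= (((d - a) ^+ 3 - (c - a) ^+ 3) / 3)%:E)%E.
Proof.
move=> cd mg g0 hg.
rewrite -int_sq //; apply: ge0_le_integral => //.
- by move=> x _; rewrite lee_fin.
- apply/measurable_EFinP; exact: measurable_funS mg.
- apply/measurable_EFinP; apply: measurable_funS (msq a) => //.
- by move=> x; rewrite /= in_itv /= => /andP[h1 h2]; rewrite lee_fin hg.
Qed.

Definition fb (B : {fset R}) (x : R) : \bar R :=
  (\big[Order.min/+oo%E]_(a <- B) ((x - a) ^+ 2)%:E)%E.

Lemma qe_int (B : {fset R}) :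
  quant_err (Pmix R) B = (\int[Pmix R]_x fb B x)%E.
Proof. by []. Qed.

Lemma Q_lower (B : {fset R}) : (#|` B| <= 3)%N -> ((1/192)%:E <= quant_err (Pmix R) B)%E.
Proof.
move=> hB; have [a1 [a2 [a3 [h12 h23 hc]]]] := cover hB.
rewrite qe_int.
apply: (le_trans (lower_sorted h12 h23)).
have mG := g3_meas a1 a2 a3.
rewrite /LI -int_Pmix; last 2 first.
- exact/measurable_EFinP.
- by move=> x; rewrite lee_fin g3_ge0.
apply: ge0_le_integral => //; try (by move=> x _; rewrite lee_fin g3_ge0);
  try (exact/measurable_EFinP); try (by move=> x _; exact: bm_ge0); try (exact: bm_meas).
- move=> x _; apply: bm_ge => b /hc [] ->; rewrite lee_fin /g3.
  + by rewrite ge_min; apply/orP; left; rewrite ge_min lexx.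
  + by rewrite ge_min; apply/orP; left; rewrite ge_min lexx orbT.
  + by rewrite ge_min lexx orbT.
Qed.

Definition alpha : {fset R} := [fset (1 / 8 : R); 3 / 8; 7 / 8]%fset.

Lemma Q_upper : (quant_err (Pmix R) alpha <= (1/192)%:E)%E.
Proof.
rewrite qe_int.
set h := g3 (1/8) (3/8) (7/8).
have mh : measurable_fun setT h by exact: g3_meas.
have h0 : forall x, 0 <= h x by move=> x; exact: g3_ge0.
apply: (@le_trans _ _ (\int[Pmix R]_x (h x)%:E)%E).
  apply: ge0_le_integral => //; try (by move=> x _; rewrite lee_fin h0);
    try (exact/measurable_EFinP); try (by move=> x _; exact: bm_ge0); try (exact: bm_meas).
  - move=> x _; rewrite /h /g3 !EFin_min !le_min; apply/andP; split; first (apply/andP; split).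
    + by apply: bm_le; rewrite !inE eqxx.
    + by apply: bm_le; rewrite !inE eqxx !orbT.
    + by apply: bm_le; rewrite !inE eqxx !orbT.
rewrite int_Pmix; last 2 first.
- exact/measurable_EFinP.
- by move=> x; rewrite lee_fin h0.
have e1 : 0 <= (1/4 : R) by lra.
have e2 : (1/4 : R) <= 1/2 by lra.
have := LI_split e1 e2 mh h0; rewrite /LI => ->.
have U1 := @LI_piece_le 0 (1/4) (1/8) h ltac:(lra) mh h0.
have U2 := @LI_piece_le (1/4) (1/2) (3/8) h ltac:(lra) mh h0.
have U3 := @LI_piece_le (3/4) 1 (7/8) h ltac:(lra) mh h0.
rewrite /LI in U1 U2 U3.
apply: (le_trans (leeD (lee_wpmul2l _ (leeD (U1 _) (U2 _))) (U3 _))).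
- by rewrite lee_fin; lra.
- by move=> x _ _; rewrite /h /g3 ge_min; apply/orP; left; rewrite ge_min lexx.
- by move=> x _ _; rewrite /h /g3 ge_min; apply/orP; left; rewrite ge_min lexx orbT.
- by move=> x _ _; rewrite /h /g3 ge_min lexx orbT.
- by rewrite -!EFinD lee_fin; lra.
Qed.

Lemma card_alpha : (#|` alpha| <= 3)%N.
Proof.
rewrite /alpha cardfsU; apply: leq_trans (leq_subr _ _) _.
by rewrite cardfsU1 !cardfs1; case: (_ \notin _).
Qed.

End S.

Unset Implicit Arguments.
Close Scope classical_set_scope.

Theorem lemma3p4 (R : realType) :
  optimal_n_means (Pmix R) 3 [fset (1 / 8 : R); 3 / 8; 7 / 8]%fset /\
  Vn (Pmix R) 3 = ((1 / 192 : R)%:E)%E.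
Proof.
have qa : quant_err (Pmix R) (alpha R) = (1/192)%:E.
  by apply/le_anti; rewrite Q_upper Q_lower // card_alpha.
have hV : Vn (Pmix R) 3 = (1/192)%:E.
  apply/le_anti/andP; split.
    rewrite /Vn; apply: ge_ereal_inf; exists (quant_err (Pmix R) (alpha R)).
      by exists (alpha R) => //; exact: card_alpha.
    by rewrite qa.
  rewrite /Vn; apply: le_ereal_inf_tmp => _ [B hB <-].
  exact: Q_lower.
split => //; split; first exact: (card_alpha R).
by rewrite hV; exact: qa.
Qed.
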